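(* Let $\mathcal H_1,\mathcal H_2$ be Hilbert spaces, $A\in\mathcal B(\mathcal H_1,\mathcal H_2)$ and $B$ its Moore--Penrose inverse. If $x\in\mathcal R(B)$, then $$\|x\|_{\mathcal H_1}^2=\|(I+BB^* )^{-1/2}x\|_{\mathcal H_1}^2+\|(I+A^*A)^{-1/2}x\|_{\mathcal H_1}^2.$$
   Context: $\mathcal B(\mathcal H_1,\mathcal H_2)$ is the space of bounded linear operators. For a closed densely defined operator $A$ between Hilbert spaces, its Moore--Penrose inverse $A^\dagger$ is the unique closed densely defined operator with $\mathcal D(A^\dagger)=\mathcal R(A)\oplus\mathcal N(A^* )$, $\mathcal N(A^\dagger)=\mathcal N(A^* )$, $AA^\dagger A=A$, $A^\dagger AA^\dagger=A^\dagger$, $AA^\dagger\subset P_{\overline{\mathcal R(A)}}$, $A^\dagger A\subset P_{\overline{\mathcal R(A^\dagger)}}$ ($P_{\mathcal E}$ the orthogonal projection onto $\mathcal E$). For closed densely defined $B$, the operators $(I+BB^* )^{-1}$, $(I+B^*B)^{-1}$ are everywhere defined, bounded, positive and self-adjoint (von Neumann), so their square roots are defined. *)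

(* Defs.v *)
(* Unbounded operators are represented as a domain (a predicate) together with
   a total function whose values outside the domain are irrelevant. *)
From mathcomp Require Import all_boot all_algebra.
From mathcomp Require Import reals.
From mathcomp.real_closed Require Import complex.
Set Implicit Arguments. Unset Strict Implicit. Unset Printing Implicit Defensive.
Import GRing.Theory Num.Theory.
Local Open Scope ring_scope.
Local Open Scope complex_scope.

Section Hilbert.
Variable R : realType.

Section OneSpace.
Variables (V : lmodType R[i]) (ip : V -> V -> R[i]).

Definition hnorm (x : V) : R := Num.sqrt (complex.Re (ip x x)).

Definition is_inner_product : Prop :=
  [/\ (forall (a : R[i]) (x y z : V), ip (a *: x + y) z = a * ip x z + ip y z),
      (forall x y : V, ip x y = (ip y x)^*),
      (forall x : V, 0 <= ip x x) &
      (forall x : V, ip x x = 0 -> x = 0)].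

Definition hconverges (u : nat -> V) (l : V) : Prop :=
  forall e : R, 0 < e -> exists N : nat, forall n, (N <= n)%N -> hnorm (u n - l) < e.

Definition hcauchy (u : nat -> V) : Prop :=
  forall e : R, 0 < e -> exists N : nat, forall m n, (N <= m)%N -> (N <= n)%N ->
    hnorm (u m - u n) < e.

Definition is_hilbert : Prop :=
  is_inner_product /\ forall u, hcauchy u -> exists l, hconverges u l.

Definition hclosure (E : V -> Prop) (y : V) : Prop :=
  forall e : R, 0 < e -> exists z, E z /\ hnorm (y - z) < e.

Definition is_subspace (E : V -> Prop) : Prop :=
  E 0 /\ forall (a : R[i]) x y, E x -> E y -> E (a *: x + y).

Definition is_orth_proj (E : V -> Prop) (x p : V) : Prop :=
  E p /\ forall e, E e -> ip (x - p) e = 0.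

(* S is a bounded positive self-adjoint operator with S^2 = T, i.e. S = T^(1/2)
   (the positive square root is unique) *)
Definition is_positive_sqrt (T S : V -> V) : Prop :=
  [/\ (forall (a : R[i]) x y, S (a *: x + y) = a *: S x + S y),
      (exists M : R, forall x, hnorm (S x) <= M * hnorm x),
      (forall x y, ip (S x) y = ip x (S y)),
      (forall x, 0 <= ip (S x) x) &
      (forall x, S (S x) = T x)].

End OneSpace.

Section TwoSpaces.
Variables (V W : lmodType R[i]) (ipV : V -> V -> R[i]) (ipW : W -> W -> R[i]).

Definition is_bounded_op (A : V -> W) : Prop :=
  (forall (a : R[i]) x y, A (a *: x + y) = a *: A x + A y) /\
  exists M : R, forall x, hnorm ipW (A x) <= M * hnorm ipV x.

Definition is_bounded_adjoint (A : V -> W) (As : W -> V) : Prop :=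
  forall x y, ipW (A x) y = ipV x (As y).

Definition is_closed_densely_defined (D : V -> Prop) (B : V -> W) : Prop :=
  [/\ is_subspace D,
      (forall (a : R[i]) x y, D x -> D y -> B (a *: x + y) = a *: B x + B y),
      (forall y, hclosure ipV D y) &
      (forall (u : nat -> V) y z, (forall n, D (u n)) -> hconverges ipV u y ->
          hconverges ipW (fun n => B (u n)) z -> D y /\ B y = z)].

Definition is_adjoint_op (D : V -> Prop) (B : V -> W)
    (Ds : W -> Prop) (Bs : W -> V) : Prop :=
  (forall z, Ds z <-> exists w, forall y, D y -> ipW (B y) z = ipV y w) /\
  (forall z, Ds z -> forall y, D y -> ipW (B y) z = ipV y (Bs z)).

End TwoSpaces.
Definition is_MP_inverse (V W : lmodType R[i]) (ipV : V -> V -> R[i])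
    (ipW : W -> W -> R[i]) (A : V -> W) (As : W -> V) (D : W -> Prop) (B : W -> V)
    : Prop :=
  is_closed_densely_defined ipW ipV D B /\
      (forall y, D y <-> exists x n, As n = 0 /\ y = A x + n) /\
      (forall y, (D y /\ B y = 0) <-> As y = 0) /\
      (forall x, D (A x) /\ A (B (A x)) = A x) /\
      (forall y, D y -> D (A (B y)) /\ B (A (B y)) = B y) /\
      (forall y, D y -> is_orth_proj ipW (hclosure ipW (fun z => exists x, z = A x))
                                     y (A (B y))) /\
      (forall x, is_orth_proj ipV
                   (hclosure ipV (fun z => exists y, D y /\ z = B y)) x (B (A x))).

End Hilbert.

(* Main.v *)
Require Import Defs.
From mathcomp Require Import all_boot all_algebra.
From mathcomp Require Import reals.
From mathcomp.real_closed Require Import complex.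
Import GRing.Theory Num.Theory.
Local Open Scope ring_scope.
Local Open Scope complex_scope.

Section Aux.
Variables (R : realType) (V : lmodType R[i]) (ip : V -> V -> R[i]).
Hypothesis hip : is_inner_product ip.

Lemma ip0l v : ip 0 v = 0.
Proof.
case: hip => lin _ _ _.
have := lin 1 0 0 v; rewrite scale1r addr0 mul1r.
by move/(congr1 (fun t => t - ip 0 v)); rewrite subrr addrK => ->.
Qed.

Lemma ipDl u w v : ip (u + w) v = ip u v + ip w v.
Proof. case: hip => lin _ _ _; by rewrite -{1}(scale1r u) lin mul1r. Qed.

Lemma ipNl u v : ip (- u) v = - ip u v.
Proof.
case: hip => lin _ _ _.
by rewrite -(addr0 (- u)) -scaleN1r lin ip0l addr0 mulN1r.
Qed.

Lemma ipDr v u w : ip v (u + w) = ip v u + ip v w.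
Proof. case: hip => _ cs _ _. by rewrite cs ipDl rmorphD /= -!cs. Qed.

Lemma ipNr v u : ip v (- u) = - ip v u.
Proof. case: hip => _ cs _ _. by rewrite cs ipNl rmorphN /= -cs. Qed.

Lemma ipBr v u w : ip v (u - w) = ip v u - ip v w.
Proof. by rewrite ipDr ipNr. Qed.

Lemma ipBl u w v : ip (u - w) v = ip u v - ip w v.
Proof. by rewrite ipDl ipNl. Qed.

Lemma ip_ext a b : (forall v, ip v a = ip v b) -> a = b.
Proof.
move=> H; case: hip => _ _ _ def.
apply/eqP; rewrite -subr_eq0; apply/eqP; apply: def.
by rewrite ipBr H subrr.
Qed.

Lemma ip_ext0 a : (forall v, ip v a = 0) -> a = 0.
Proof. move=> H; case: hip => _ _ _ def; exact: def. Qed.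

Lemma hnorm_sq x : hnorm ip x ^+ 2 = complex.Re (ip x x).
Proof.
rewrite /hnorm sqr_sqrtr //.
case: hip => _ _ pos _. have := pos x. rewrite lecE => /andP[_].
by [].
Qed.

Lemma hnorm0 : hnorm ip 0 = 0.
Proof. by rewrite /hnorm ip0l /= sqrtr0. Qed.

End Aux.
Arguments ip0l {R V ip}.
Arguments ipDl {R V ip}.
Arguments ipNl {R V ip}.
Arguments ipDr {R V ip}.
Arguments ipNr {R V ip}.
Arguments ipBr {R V ip}.
Arguments ipBl {R V ip}.
Arguments ip_ext {R V ip}.
Arguments ip_ext0 {R V ip}.
Arguments hnorm_sq {R V ip}.
Arguments hnorm0 {R V ip}.

Lemma ReD (R : realType) (a b : R[i]) : complex.Re (a + b) = complex.Re a + complex.Re b.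
Proof. by case: a; case: b. Qed.

Theorem proposition3p4 (R : realType) (H1 H2 : lmodType R[i])
    (ip1 : H1 -> H1 -> R[i]) (ip2 : H2 -> H2 -> R[i])
    (A : H1 -> H2) (As : H2 -> H1)
    (D : H2 -> Prop) (B : H2 -> H1) (Ds : H1 -> Prop) (Bs : H1 -> H2)
    (T S1 U S2 : H1 -> H1) (x : H1) :
  is_hilbert ip1 -> is_hilbert ip2 ->
  is_bounded_op ip1 ip2 A ->
  is_bounded_adjoint ip1 ip2 A As ->
  is_MP_inverse ip1 ip2 A As D B ->
  is_adjoint_op ip2 ip1 D B Ds Bs ->
  (* T = (I + B B^* )^{-1} *)
  (forall y, [/\ Ds (T y), D (Bs (T y)) & T y + B (Bs (T y)) = y]) ->
  (* S1 = (I + B B^* )^{-1/2} *)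
  is_positive_sqrt ip1 T S1 ->
  (* U = (I + A^* A)^{-1} *)
  (forall y, U y + As (A (U y)) = y) ->
  (* S2 = (I + A^* A)^{-1/2} *)
  is_positive_sqrt ip1 U S2 ->
  (* x in R(B) *)
  (exists y, D y /\ x = B y) ->
  hnorm ip1 x ^+ 2 = hnorm ip1 (S1 x) ^+ 2 + hnorm ip1 (S2 x) ^+ 2.

Proof.
move=> [hip1 _] [hip2 _] [Alin _] hAs [[Dsub Blin _ _] [hD [hN [hABA [hBAB [hAB hBA]]]]]]
  [hDs hBs] hT [_ _ S1sa _ S1sq] hU [_ _ S2sa _ S2sq] [y [Dy Ex]].
have [Dsz Dp Ez] := hT x.
have DAv : forall v, D (A v) by move=> v; case: (hABA v).
have Dq : D ((-1) *: Bs (T x) + y) by case: Dsub => _; apply.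
have zR : T x = B ((-1) *: Bs (T x) + y).
  by rewrite Blin // scaleN1r -Ex; apply/eqP; rewrite eq_sym addrC subr_eq Ez.
have zcl : hclosure ip1 (fun z => exists y, D y /\ z = B y) (T x).
  move=> e e0; exists (T x); split; first by exists ((-1) *: Bs (T x) + y).
  by rewrite subrr hnorm0.
have Asp : As (Bs (T x)) = T x.
  apply: (ip_ext hip1) => v; rewrite -hAs -hBs //.
  case: (hBA v) => _ /(_ _ zcl); rewrite ipBl // => /subr0_eq.
  by [].
have AsABp : As (A (B (Bs (T x)))) = As (Bs (T x)).
  apply: (ip_ext hip1) => v; rewrite -!hAs.
  case: (hAB _ Dp) => _ /(_ (A v)).
  have : hclosure ip2 (fun z => exists x, z = A x) (A v).
    move=> e e0; exists (A v); split; first by exists v.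
    by rewrite subrr hnorm0.
  move=> H /(_ H) /(congr1 (@conjc _)).
  case: (hip2) => _ cs _ _; rewrite -cs conjc0 ipBr // => /subr0_eq.
  by [].
have AsB : forall u v, As (u - v) = As u - As v.
  move=> u v; apply: (ip_ext hip1) => t.
  by rewrite ipBr // -!hAs ipBr.
have AB : forall u v, A (u - v) = A u - A v.
  move=> u v; by rewrite addrC -scaleN1r Alin scaleN1r addrC.
have wE : U x = B (Bs (T x)).
  set d := U x - B (Bs (T x)).
  have d0 : d + As (A d) = 0.
    rewrite /d AB AsB AsABp Asp addrACA -opprD hU.
    by rewrite [in X in _ - X]addrC Ez subrr.
  have : ip1 (d + As (A d)) d = 0 by rewrite d0 ip0l.
  rewrite ipDl //.
  case: (hip1) => _ cs pos def; case: (hip2) => _ _ pos2 _.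
  rewrite [ip1 (As _) _]cs -hAs => /eqP; rewrite paddr_eq0 ?conj_ge0 ?pos ?pos2 //.
  case/andP => /eqP /def /eqP; rewrite subr_eq0 => /eqP.
  by [].
rewrite !(hnorm_sq hip1) S1sa S1sq S2sa S2sq -ReD -ipDr // wE Ez.
reflexivity.
Qed.
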